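(* Let $M$ be an $\mathfrak{S}$-module, $\mathfrak{S}=\mathbb{Z}[t]/(t^p-1)$, with $\operatorname{im}(1-t)=M$. Then $N(t)=0$ on $M$ and $\ker(1-t)$ is a $\mathbb{Z}/p$-vector space. Let $(e_i)_{i\in I}$ be a basis of $\ker(1-t)$. Then there is an injective $\mathfrak{S}$-module map $\psi\colon\bigoplus_{i\in I}\mathbb{Z}[\vartheta,1/p]/(1-\vartheta)\mathbb{Z}[\vartheta]\to M$ with uniquely $p$-divisible cokernel.
   Context: $p$ is a prime, $N(t)=1+t+\dots+t^{p-1}$, $\vartheta$ is a primitive $p$-th root of unity, so $\mathbb{Z}[\vartheta]\cong\mathbb{Z}[t]/(N(t))$; $t$ acts on $\mathbb{Z}[\vartheta,1/p]/(1-\vartheta)\mathbb{Z}[\vartheta]$ by multiplication with $\vartheta$. Uniquely $p$-divisible means multiplication by $p$ is bijective. *)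

(* Defs.v *)
From HB Require Import structures.
From mathcomp Require Import all_boot all_order all_algebra all_field.
Set Implicit Arguments. Unset Strict Implicit. Unset Printing Implicit Defensive.
Import Order.TTheory GRing.Theory Num.Theory.
Local Open Scope ring_scope.

Definition in_Zth (th x : algC) : Prop :=
  exists f : {poly int}, x = (map_poly (fun z : int => z%:~R) f).[th].

Definition in_Zthp (p : nat) (th x : algC) : Prop :=
  exists k : nat, in_Zth th (x * (p%:R) ^+ k).

Definition in_ideal (th x : algC) : Prop :=
  exists y, in_Zth th y /\ x = (1 - th) * y.

Definition Nt (M : zmodType) (p : nat) (t : M -> M) (m : M) : M :=
  \sum_(j < p) iter j t m.

Definition is_basis_ker (M : zmodType) (p : nat) (t : M -> M)
    (I : eqType) (e : I -> M) : Prop :=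
  (forall i, e i - t (e i) = 0) /\
  (forall (s : seq I) (c : I -> nat), uniq s ->
      \sum_(i <- s) e i *+ c i = 0 -> forall i, i \in s -> (p %| c i)%N) /\
  (forall m, m - t m = 0 ->
      exists (s : seq I) (c : I -> nat), m = \sum_(i <- s) e i *+ c i).

(* image of the map psi : (+)_{i in I} Z[theta,1/p]/(1-theta)Z[theta] -> M,
   given by its components phi i (defined on representatives in algC) *)
Definition in_image (M : zmodType) (p : nat) (th : algC) (I : eqType)
    (phi : I -> algC -> M) (m : M) : Prop :=
  exists (s : seq I) (x : I -> algC),
    (forall i, i \in s -> in_Zthp p th (x i)) /\
    m = \sum_(i <- s) phi i (x i).

(* Main.v *)
Require Import Defs.
From HB Require Import structures.
From mathcomp Require Import all_boot all_order all_algebra all_field.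
From mathcomp Require Import ring.
From Stdlib Require Import ClassicalEpsilon.
Set Implicit Arguments. Unset Strict Implicit. Unset Printing Implicit Defensive.
Import Order.TTheory GRing.Theory Num.Theory.
Local Open Scope ring_scope.


Section PE.
Variables (M : zmodType) (t : {additive M -> M}).
Definition pe (f : {poly int}) (m : M) : M := \sum_(i < size f) iter i t m *~ f`_i.

Lemma pe_widen n (f : {poly int}) m : (size f <= n)%N -> pe f m = \sum_(i < n) iter i t m *~ f`_i.
Proof.
move=> le; rewrite /pe (big_ord_widen n (fun i => iter i t m *~ f`_i) le) big_mkcond /=.
apply: eq_bigr => i _; case: ifP => // /negbT; rewrite -leqNgt => h.
by rewrite nth_default // mulr0z.
Qed.

Lemma iter_add i a b : iter i t (a + b) = iter i t a + iter i t b.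
Proof. by elim: i => //= i ->; rewrite raddfD. Qed.
Lemma iter_t i m : iter i t (t m) = t (iter i t m).
Proof. by elim: i => //= i ->. Qed.
Lemma iter_mulz i m z : iter i t (m *~ z) = iter i t m *~ z.
Proof. by elim: i => //= i ->; rewrite raddfMz. Qed.

Lemma pe_add (f g : {poly int}) m : pe (f + g) m = pe f m + pe g m.
Proof.
pose n := maxn (size f) (size g).
rewrite (@pe_widen n (f + g)); last by rewrite (leq_trans (size_polyD _ _)).
rewrite (@pe_widen n f) ?leq_maxl // (@pe_widen n g) ?leq_maxr //.
by rewrite -big_split; apply: eq_bigr => i _; rewrite coefD mulrzDr.
Qed.

Lemma pe0 m : pe 0 m = 0.
Proof. by rewrite /pe size_poly0 big_ord0. Qed.

Lemma pe_opp f m : pe (- f) m = - pe f m.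
Proof. by apply/eqP; rewrite -subr_eq0 opprK -pe_add addNr pe0. Qed.

Lemma pe_sub f g m : pe (f - g) m = pe f m - pe g m.
Proof. by rewrite pe_add pe_opp. Qed.

Lemma pe_addm f a b : pe f (a + b) = pe f a + pe f b.
Proof. by rewrite /pe -big_split; apply: eq_bigr => i _; rewrite iter_add mulrzDl. Qed.

Lemma pe_t f m : pe f (t m) = t (pe f m).
Proof. by rewrite /pe raddf_sum; apply: eq_bigr => i _; rewrite iter_t raddfMz. Qed.

Lemma pe_mulz f m z : pe f (m *~ z) = pe f m *~ z.
Proof. by rewrite /pe mulrz_suml; apply: eq_bigr => i _; rewrite iter_mulz -!mulrzA mulrC. Qed.

Lemma pe_C c m : pe c%:P m = m *~ c.
Proof.
rewrite (@pe_widen 1) ?size_polyC ?leq_b1 // big_ord1 /=.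
by rewrite coefC.
Qed.

Lemma pe_mulX f m : pe (f * 'X) m = t (pe f m).
Proof.
have [->|nz] := eqVneq f 0; first by rewrite mul0r !pe0 raddf0.
rewrite (@pe_widen (size f).+1); last by rewrite size_mulX.
rewrite big_ord_recl coefMX /= mulr0z add0r -pe_t /pe.
by apply: eq_bigr => i _; rewrite coefMX /= iter_t /=.
Qed.

Lemma pe_scale c g m : pe (c%:P * g) m = pe g m *~ c.
Proof.
rewrite mul_polyC (@pe_widen (size g)) ?size_scale_leq // /pe mulrz_suml.
by apply: eq_bigr => i _; rewrite coefZ mulrC mulrzA.
Qed.

Lemma pe_mul f g m : pe (f * g) m = pe f (pe g m).
Proof.
elim/poly_ind: f m => [|f c IH] m; first by rewrite mul0r !pe0.
rewrite mulrDl pe_add -mulrA (mulrC 'X) mulrA pe_mulX IH pe_add pe_mulX pe_C.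
by rewrite pe_scale.
Qed.
End PE.


Section Alg.
Variables (p : nat) (th : algC).
Hypothesis hp : prime p.
Hypothesis hth : p.-primitive_root th.

Definition ev (f : {poly int}) : algC := (map_poly (fun z : int => z%:~R) f).[th].

Lemma evD f g : ev (f + g) = ev f + ev g.
Proof. by rewrite /ev rmorphD hornerD. Qed.
Lemma evN f : ev (- f) = - ev f.
Proof. by rewrite /ev rmorphN hornerN. Qed.
Lemma evB f g : ev (f - g) = ev f - ev g.
Proof. by rewrite evD evN. Qed.
Lemma evM f g : ev (f * g) = ev f * ev g.
Proof. by rewrite /ev rmorphM hornerM. Qed.
Lemma evC c : ev c%:P = c%:~R.
Proof. by rewrite /ev map_polyC hornerC. Qed.
Lemma evX : ev 'X = th.
Proof. by rewrite /ev map_polyX hornerX. Qed.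
Lemma ev1 : ev 1 = 1.
Proof. by rewrite /ev rmorph1 hornerC. Qed.
Lemma evXn n f : ev (f ^+ n) = ev f ^+ n.
Proof. by rewrite /ev rmorphXn horner_exp. Qed.

Lemma th_neq1 : th != 1.
Proof.
have := eq_prim_root_expr hth 1 0; rewrite expr1 expr0 => ->.
by rewrite /eqn mod0n modn_small ?prime_gt1.
Qed.

Lemma pi_neq0 : 1 - th != 0.
Proof. by rewrite subr_eq0 eq_sym th_neq1. Qed.

Definition Np : {poly int} := \sum_(i < p) 'X^i.

Lemma Np_eq : 'X^p - 1 = ('X - 1) * Np.
Proof. by rewrite /Np subrX1. Qed.

Lemma ev_Np : ev Np = 0.
Proof.
have : ev ('X^p - 1) = 0 by rewrite evB evXn evX ev1 prim_expr_order // subrr.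
rewrite Np_eq evM evB evX ev1 => /eqP; rewrite mulf_eq0 subr_eq0 (negbTE th_neq1) /=.
by move/eqP.
Qed.

Lemma Np_size_monic : size Np = p /\ Np \is monic.
Proof.
have p0 : (0 < p)%N by rewrite prime_gt0.
have h1 := Np_eq; have hX : ('X - 1 : {poly int}) \is monic by rewrite -polyC1 monicXsubC.
have nz : Np != 0.
  apply/eqP=> e; move: h1; rewrite e mulr0 => /eqP; rewrite -polyC1 -size_poly_eq0.
  by rewrite size_XnsubC.
have e : lead_coef Np = 1.
  have := congr1 lead_coef h1; rewrite lead_coefM (monicP hX) mul1r => <-.
  by apply/monicP; rewrite -polyC1; exact: monicXnsubC.
split; last by apply/monicP.
have := congr1 (fun q : {poly int} => size q) h1 => /=.
rewrite -polyC1 size_XnsubC // polyC1 (size_mul (monic_neq0 hX) nz).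
by rewrite -polyC1 size_XsubC /= => [[]] ->.
Qed.

Lemma Np1 : Np.[1] = p%:R.
Proof.
rewrite /Np horner_sum (eq_bigr (fun _ => 1)) ?sumr_const ?card_ord //.
by move=> i _; rewrite hornerXn expr1n.
Qed.

Lemma small_root (r : {poly int}) : (size r < p)%N -> ev r = 0 -> r = 0.
Proof.
move=> hs hr; apply/eqP; apply/negPn/negP => nz.
have [pf [Dpf mon] dv] := minCpolyP th.
pose rQ := map_poly (fun z : int => z%:~R : rat) r.
have hrQ : root (map_poly ratr rQ) th.
  rewrite /root -map_poly_comp.
  rewrite (@eq_map_poly _ _ _ (fun z : int => z%:~R)); first by apply/eqP. move=> z /=.
  by rewrite rmorph_int.
rewrite dv in hrQ.
have rQ0 : rQ != 0.
  by rewrite -size_poly_eq0 size_map_inj_poly ?size_poly_eq0 //; apply: intr_inj.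
have := dvdp_leq rQ0 hrQ.
rewrite size_map_inj_poly //; last by apply: intr_inj.
have : size pf = p.
  rewrite -(size_map_poly (ratr : rat -> algC)) -Dpf (minCpoly_cyclotomic hth) size_cyclotomic.
  by rewrite totient_prime // prednK // prime_gt0.
move=> ->; rewrite leqNgt hs.
done.
Qed.


Lemma mapQC (f : {poly int}) :
  map_poly (ratr : rat -> algC) (map_poly (fun z : int => z%:~R : rat) f) =
  map_poly (fun z : int => z%:~R) f.
Proof.
rewrite -map_poly_comp; apply: eq_map_poly => z /=; by rewrite rmorph_int.
Qed.

Lemma size_minC : size (minCpoly th) = p.
Proof.
rewrite (minCpoly_cyclotomic hth) size_cyclotomic.
by rewrite totient_prime // prednK // prime_gt0.
Qed.

Lemma minC_Nc : minCpoly th = map_poly (fun z : int => z%:~R) Np.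
Proof.
have [pf [Dpf mon] dv] := minCpolyP th.
have : pf %| map_poly (fun z : int => z%:~R : rat) Np.
  by rewrite -dv /root mapQC; apply/eqP; exact: ev_Np.
rewrite -(dvdp_map (ratr : {rmorphism rat -> algC})) -Dpf mapQC => hd.
have [sN mN] := Np_size_monic.
apply/eqP; rewrite -eqp_monic ?minCpoly_monic //; last first.
  by apply: monic_map.
rewrite -dvdp_size_eqp // size_minC size_map_inj_poly ?sN //; exact: intr_inj.
Qed.

Lemma p_prod : p%:R = \prod_(k < p | coprime k p) (1 - th ^+ k).
Proof.
have := congr1 (fun q => q.[1]) minC_Nc => /=.
rewrite (minCpoly_cyclotomic hth) /cyclotomic horner_prod.
rewrite -[1 in RHS](rmorph1 (intr : int -> algC)) horner_map Np1 rmorph_nat => <-.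
by apply: eq_bigr => k _; rewrite hornerXsubC.
Qed.

Lemma KEY : exists e h, (1 - th) ^+ e = p%:R * ev h.
Proof.
rewrite p_prod.
apply: (big_ind (fun x => exists e h, (1 - th) ^+ e = x * ev h)).
- by exists 0%N, 1; rewrite ev1 mul1r expr0.
- move=> x y [e1 [h1 E1]] [e2 [h2 E2]]; exists (e1 + e2)%N, (h1 * h2).
  by rewrite exprD E1 E2 evM mulrACA.
move=> k cop.
have pk : p.-primitive_root (th ^+ k) by rewrite prim_root_exp_coprime.
have [j Ej] := prim_rootP pk (prim_expr_order hth).
exists 1%N, (\sum_(i < j) 'X^(k * i)).
rewrite expr1 /ev rmorph_sum horner_sum.
have -> : \sum_(i < j) (map_poly (fun z : int => z%:~R) 'X^(k * i)).[th] = \sum_(i < j) (th ^+ k) ^+ i.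
  by apply: eq_bigr => i _; rewrite map_polyXn hornerXn exprM.
have := subrX1 (th ^+ k) j; rewrite -Ej => E.
apply: (@oppr_inj _); rewrite opprB E; ring.
Qed.

Lemma FT (g : {poly int}) : exists q, ev g = (g.[1])%:~R + (1 - th) * ev q.
Proof.
have : root (g - (g.[1])%:P) 1 by rewrite /root !hornerE subrr.
case/factor_theorem => q Eq; exists (- q).
have := congr1 ev Eq; rewrite evB evC evM evB evX evC => E.
rewrite evN; apply/eqP; rewrite -subr_eq0; apply/eqP.
rewrite (_ : ev g = ev g - (g.[1])%:~R + (g.[1])%:~R); last by ring.
rewrite E /=; ring.
Qed.

End Alg.


Section Main.
Variables (p : nat) (th : algC) (M : zmodType) (t : {additive M -> M}).
Hypothesis hp : prime p.
Hypothesis hth : p.-primitive_root th.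
Hypothesis hper : forall m : M, iter p t m = m.
Hypothesis hsurj : forall m : M, exists m' : M, m = m' - t m'.

Local Notation ev := (ev th).
Local Notation pe := (pe t).

Lemma pe1 m : pe 1 m = m.
Proof. by rewrite -polyC1 pe_C. Qed.
Lemma peX m : pe 'X m = t m.
Proof. by rewrite -(mul1r 'X) pe_mulX pe1. Qed.
Lemma pe_pi m : pe (1 - 'X) m = m - t m.
Proof. by rewrite pe_sub pe1 peX. Qed.
Lemma pe_Xn i m : pe ('X^i) m = iter i t m.
Proof. by elim: i => [|i IH]; rewrite ?expr0 ?pe1 // exprSr pe_mulX IH. Qed.
Lemma pe_m0 f : pe f 0 = 0.
Proof. by rewrite -(mulr0z (0 : M)) pe_mulz mulr0z. Qed.
Lemma pe_Np m : pe (Np p) m = Nt p t m.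
Proof.
rewrite /Np /Nt (big_morph (pe ^~ m) (fun f g => pe_add t f g m) (pe0 t m)).
by apply: eq_bigr => i _; rewrite pe_Xn.
Qed.
Lemma pe_fix f m : t m = m -> pe f m = m *~ f.[1].
Proof.
move=> tm; rewrite /pe horner_coef mulrz_sumr; apply: eq_bigr => i _.
have -> : iter i t m = m by elim: (nat_of_ord i) => //= j ->.
by rewrite expr1n mulr1.
Qed.

Lemma hN m : Nt p t m = 0.
Proof.
have [m' ->] := hsurj m; rewrite -pe_pi -pe_Np -pe_mul.
have -> : Np p * (1 - 'X) = 1 - 'X^p.
  by apply: oppr_inj; rewrite opprB mulrC -mulNr opprB -Np_eq.
by rewrite pe_sub pe1 pe_Xn hper subrr.
Qed.

Lemma ZERO f m : ev f = 0 -> pe f m = 0.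
Proof.
move=> hf; have [sN mN] := Np_size_monic hp.
rewrite (Pdiv.RingMonic.rdivp_eq mN f).
set r := Pdiv.CommonRing.rmodp _ _.
have hr : r = 0.
  apply: (small_root hp hth).
    by rewrite -sN Pdiv.Ring.ltn_rmodp monic_neq0.
  move: hf; rewrite {1}(Pdiv.RingMonic.rdivp_eq mN f) evD evM (ev_Np hp hth) mulr0 add0r.
  done.
by rewrite hr addr0 pe_mul pe_Np hN pe_m0.
Qed.

Lemma EQ f g m : ev f = ev g -> pe f m = pe g m.
Proof.
move=> h; apply/eqP; rewrite -subr_eq0 -pe_sub; apply/eqP/ZERO.
by rewrite evB h subrr.
Qed.


Lemma hker m : m - t m = 0 -> m *+ p = 0.
Proof.
move/eqP; rewrite subr_eq0 => /eqP tm; rewrite -(hN m) /Nt.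
rewrite (eq_bigr (fun _ => m)) ?sumr_const ?card_ord // => i _.
by elim: (nat_of_ord i) => //= j ->.
Qed.

Lemma ev1X : ev (1 - 'X) = 1 - th.
Proof. by rewrite evB ev1 evX. Qed.

Lemma evP : ev ((p%:Z)%:P) = p%:R.
Proof. by rewrite evC. Qed.

Lemma surj_pow e m : exists m', m = pe ((1 - 'X) ^+ e) m'.
Proof.
elim: e m => [|e IH] m; first by exists m; rewrite expr0 pe1.
have [m1 ->] := IH m; have [m2 ->] := hsurj m1.
by exists m2; rewrite exprSr pe_mul pe_pi.
Qed.

Lemma hdiv (m : M) : exists m' : M, m = m' *+ p.
Proof.
have [e [h Eh]] := KEY hp hth.
have [m' ->] := surj_pow e m.
exists (pe h m').
rewrite (@EQ _ ((p%:Z)%:P * h)); last by rewrite evM evP evXn ev1X.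
by rewrite pe_scale.
Qed.

Lemma tors e h (m : M) : (1 - th) ^+ e = p%:R * ev h -> m *+ p = 0 -> pe ((1 - 'X) ^+ e) m = 0.
Proof.
move=> Eh hm.
rewrite (@EQ _ (h * (p%:Z)%:P)); last by rewrite evM evP evXn ev1X mulrC.
by rewrite pe_mul pe_C -pmulrn hm pe_m0.
Qed.


Definition pre (m : M) : M := proj1_sig (constructive_indefinite_description _ (hsurj m)).
Lemma pre_spec m : m = pre m - t (pre m).
Proof. by rewrite /pre; case: constructive_indefinite_description. Qed.

Lemma zthp_rep x : in_Zthp p th x -> exists k f, x * (1 - th) ^+ k = ev f.
Proof.
case=> k [f Ef]; have [e [h Eh]] := KEY hp hth.
exists (e * k)%N, (f * h ^+ k).
by rewrite exprM Eh exprMn mulrA Ef evM evXn.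
Qed.

Lemma p_ideal : exists q, p%:R = (1 - th) * ev q.
Proof.
have [q Eq] := FT th (Np p); exists (- q).
move: Eq; rewrite (ev_Np hp hth) Np1 rmorph_nat evN => /eqP; rewrite eq_sym addr_eq0 => /eqP ->.
by rewrite mulrN.
Qed.

Section Phi.
Variables (I : eqType) (e : I -> M).
Hypothesis he : is_basis_ker p t e.

Definition a i k := iter k pre (e i).

Lemma a_step i k : pe (1 - 'X) (a i k.+1) = a i k.
Proof. by rewrite pe_pi /a /= -pre_spec. Qed.

Lemma a_pow i k d : pe ((1 - 'X) ^+ d) (a i (k + d)) = a i k.
Proof.
elim: d => [|d IH]; first by rewrite expr0 pe1 addn0.
by rewrite exprSr pe_mul addnS a_step.
Qed.

Definition phi i x :=
  let kf := epsilon (inhabits (0%N, 0 : {poly int}))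
     (fun kf : nat * {poly int} => x * (1 - th) ^+ kf.1 = ev kf.2) in
  pe kf.2 (a i kf.1).

Lemma WD i x k f l g : x * (1 - th) ^+ k = ev f -> x * (1 - th) ^+ l = ev g ->
  pe f (a i k) = pe g (a i l).
Proof.
wlog kl : k f l g / (k <= l)%N.
  move=> W Ef Eg; case: (leqP k l) => h; first exact: W.
  by symmetry; apply: W => //; exact: ltnW.
move=> Ef Eg; rewrite -(subnKC kl) -[in LHS](a_pow i k (l - k)) -pe_mul.
symmetry; apply: EQ; rewrite evM evXn ev1X -Ef -Eg -mulrA -exprD subnKC //.
Qed.

Lemma phi_spec i x k f : x * (1 - th) ^+ k = ev f -> phi i x = pe f (a i k).
Proof.
move=> E; rewrite /phi.
set P := (fun kf : nat * {poly int} => x * (1 - th) ^+ kf.1 = ev kf.2).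
have H := epsilon_spec (inhabits (0%N, 0 : {poly int})) P (ex_intro P (k, f) E).
exact: WD H E.
Qed.


Lemma phi_add i x y : in_Zthp p th x -> in_Zthp p th y ->
  phi i (x + y) = phi i x + phi i y.
Proof.
move=> /zthp_rep [k [f Ef]] /zthp_rep [l [g Eg]].
rewrite (phi_spec i Ef) (phi_spec i Eg).
rewrite (@phi_spec i (x + y) (k + l) (f * (1 - 'X) ^+ l + g * (1 - 'X) ^+ k)).
  by rewrite pe_add !pe_mul a_pow addnC a_pow.
rewrite evD !evM !evXn ev1X -Ef -Eg exprD.
set u := (1 - th) ^+ k; set v := (1 - th) ^+ l; ring.
Qed.

Lemma phi_t i x : in_Zthp p th x -> phi i (th * x) = t (phi i x).
Proof.
move=> /zthp_rep [k [f Ef]]; rewrite (phi_spec i Ef) (@phi_spec i _ k ('X * f)).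
  by rewrite mulrC pe_mulX.
by rewrite evM evX -Ef mulrA.
Qed.

Lemma phi_ideal i x : in_ideal th x -> phi i x = 0.
Proof.
case=> y [[g Eg] ->]; rewrite (@phi_spec i _ 0 (g * (1 - 'X))).
  by rewrite pe_mul pe_pi /a /= (he.1 i) pe_m0.
by rewrite expr0 mulr1 evM ev1X mulrC Eg.
Qed.

Lemma INJ0 (s : seq I) (g : I -> {poly int}) : uniq s ->
  \sum_(i <- s) pe (g i) (e i) = 0 ->
  forall i, i \in s -> exists y, ev (g i) = (1 - th) * ev y.
Proof.
move=> us H.
have tfix i : t (e i) = e i by apply/eqP; rewrite eq_sym -subr_eq0 (he.1 i).
pose c i := (g i).[1].
pose n i := `|(c i %% p)%Z|%N.
have pz : p%:Z != 0 by rewrite eqz_nat -lt0n prime_gt0.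
have En i : ((n i)%:Z = c i %% p)%Z by rewrite /n gez0_abs // modz_ge0.
have Ec i : c i = (c i %/ p)%Z * p%:Z + (n i)%:Z by rewrite En -divz_eq.
have He i : e i *~ c i = e i *+ n i.
  rewrite {1}Ec mulrzDr mulrzA.
  have -> : e i *~ (c i %/ p)%Z *~ p%:Z = 0.
    rewrite -mulrzA mulrC mulrzA.
    have -> : e i *~ p%:Z = e i *+ p by [].
    by rewrite hker ?mul0rz // (he.1 i).
  by rewrite add0r.
have H2 : \sum_(i <- s) e i *+ n i = 0.
  by rewrite -[RHS]H; apply: eq_bigr => i _; rewrite pe_fix // He.
move=> i si.
have /dvdnP [n' En'] := he.2.1 s n us H2 i si.
have [q Eq] := FT th (g i).
have [q' Eq'] := p_ideal.
exists (q' * ((c i %/ p)%Z + n'%:Z)%:P + q).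
rewrite Eq evD evM evC mulrDr mulrA -Eq'; congr (_ + _).
have E2 : c i = ((c i %/ p)%Z + n'%:Z) * p%:Z by rewrite {1}Ec En' PoszM mulrDl.
by rewrite -/(c i) [in LHS]E2 intrM mulrC.
Qed.


Lemma INJk (s : seq I) : uniq s -> forall K (f : I -> {poly int}),
  \sum_(i <- s) pe (f i) (a i K) = 0 ->
  forall i, i \in s -> exists y, ev (f i) = (1 - th) ^+ K.+1 * ev y.
Proof.
move=> us; elim=> [|K IH] f H.
  by move=> i si; have [y Ey] := INJ0 us H si; exists y; rewrite expr1.
have H' : \sum_(i <- s) pe (f i) (a i K) = 0.
  transitivity (pe (1 - 'X) (\sum_(i <- s) pe (f i) (a i K.+1))).
    rewrite pe_pi raddf_sum -sumrB; apply: eq_bigr => i _.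
    by rewrite -pe_pi -pe_mul mulrC pe_mul a_step.
  by rewrite H pe_m0.
pose y i := epsilon (inhabits (0 : {poly int}))
  (fun y => ev (f i) = (1 - th) ^+ K.+1 * ev y).
have Ey i : i \in s -> ev (f i) = (1 - th) ^+ K.+1 * ev (y i).
  by move=> si; exact: (epsilon_spec _ _ (IH f H' i si)).
have H2 : \sum_(i <- s) pe (y i) (e i) = 0.
  rewrite -[RHS]H big_seq_cond [RHS]big_seq_cond; apply: eq_bigr => i /andP [si _].
  rewrite (@EQ (f i) (y i * (1 - 'X) ^+ K.+1)); last by rewrite evM evXn ev1X mulrC Ey.
  by rewrite pe_mul -(add0n K.+1) a_pow.
move=> i si; have [z Ez] := INJ0 us H2 si.
by exists z; rewrite Ey // Ez mulrA -exprSr.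
Qed.

Lemma INJ (s : seq I) (x : I -> algC) : uniq s ->
  (forall i, i \in s -> in_Zthp p th (x i)) ->
  \sum_(i <- s) phi i (x i) = 0 -> forall i, i \in s -> in_ideal th (x i).
Proof.
move=> us hx H.
pose kf i := epsilon (inhabits (0%N, 0 : {poly int}))
  (fun kf : nat * {poly int} => x i * (1 - th) ^+ kf.1 = ev kf.2).
have Ekf i : i \in s -> x i * (1 - th) ^+ (kf i).1 = ev (kf i).2.
  move=> si; have [k [f E]] := zthp_rep (hx i si).
  exact: (epsilon_spec (inhabits (0%N, 0 : {poly int}))
    (fun kf : nat * {poly int} => x i * (1 - th) ^+ kf.1 = ev kf.2) (ex_intro _ (k, f) E)).
pose K := (\sum_(i <- s) (kf i).1)%N.
have leK i : i \in s -> ((kf i).1 <= K)%N.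
  by move=> si; rewrite /K (bigD1_seq i) //=; exact: leq_addr.
pose F i := (kf i).2 * (1 - 'X) ^+ (K - (kf i).1).
have EF i : i \in s -> x i * (1 - th) ^+ K = ev (F i).
  by move=> si; rewrite evM evXn ev1X -Ekf // -mulrA -exprD subnKC // leK.
have H2 : \sum_(i <- s) pe (F i) (a i K) = 0.
  rewrite -[RHS]H big_seq_cond [RHS]big_seq_cond; apply: eq_bigr => i /andP [si _].
  by rewrite (phi_spec i (EF i si)).
move=> i si; have [y Ey] := INJk us H2 si.
exists (ev y); split; first by exists y.
have nz : (1 - th) ^+ K != 0 by rewrite expf_neq0 // (pi_neq0 hp hth).
apply: (mulIf nz); rewrite EF // Ey exprSr.
set u := (1 - th) ^+ K; ring.
Qed.


Lemma zthp0 : in_Zthp p th 0.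
Proof. by exists 0%N, 0; rewrite mul0r rmorph0 horner0. Qed.

Lemma zthp_add x y : in_Zthp p th x -> in_Zthp p th y -> in_Zthp p th (x + y).
Proof.
case=> k [f Ef] [l [g Eg]]; exists (k + l)%N.
exists (f * ((p%:Z)%:P) ^+ l + g * ((p%:Z)%:P) ^+ k).
rewrite -[_.[th]]/(ev _) evD !evM !evXn evP -[ev f]Ef -[ev g]Eg exprD.
set u := p%:R ^+ k; set v := p%:R ^+ l; ring.
Qed.

Lemma zthp_muln x n : in_Zthp p th x -> in_Zthp p th (x *+ n).
Proof.
move=> hx; elim: n => [|n IH]; first by rewrite mulr0n; exact: zthp0.
by rewrite mulrS; apply: zthp_add.
Qed.

Lemma zthp_divpi x : in_Zthp p th x -> in_Zthp p th (x / (1 - th)).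
Proof.
case=> k [f Ef]; have [q Eq] := p_ideal; exists k.+1, (f * q).
rewrite -[_.[th]]/(ev _) evM -[ev f]Ef exprSr {2}Eq.
have nz := pi_neq0 hp hth.
by rewrite mulrA -(mulrA x) (mulrC _ (p%:R ^+ k)) !mulrA divfK.
Qed.

Lemma zthp_divp x : in_Zthp p th x -> in_Zthp p th (x / p%:R).
Proof.
case=> k [f Ef]; exists k.+1, f.
have nz : p%:R != 0 :> algC by rewrite pnatr_eq0 -lt0n prime_gt0.
by rewrite exprSr -[_.[th]]/(ev _) -[ev f]Ef [p%:R ^+ k * _]mulrC mulrA divfK.
Qed.

Lemma phi0 i : phi i 0 = 0.
Proof. by apply: phi_ideal; exists 0; split; [exists 0; rewrite rmorph0 horner0|rewrite mulr0]. Qed.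

Lemma phi_muln i x n : in_Zthp p th x -> phi i (x *+ n) = phi i x *+ n.
Proof.
move=> hx; elim: n => [|n IH]; first by rewrite !mulr0n phi0.
by rewrite !mulrS phi_add ?IH //; apply: zthp_muln.
Qed.

Lemma sum_count (F : I -> M) (s r : seq I) : uniq r -> {subset s <= r} ->
  \sum_(j <- s) F j = \sum_(j <- r) F j *+ count_mem j s.
Proof.
move=> ur; elim: s => [|x s IH] sub.
  by rewrite big_nil big1 // => j _; rewrite mulr0n.
rewrite big_cons IH; last by move=> j js; apply: sub; rewrite inE js orbT.
have xr : x \in r by apply: sub; rewrite inE eqxx.
rewrite [RHS](eq_bigr (fun j => F j *+ (x == j) + F j *+ count_mem j s)); last first.
  by move=> j _; rewrite -mulrnDr.
rewrite big_split /=; congr (_ + _).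
rewrite (bigD1_seq x) //= eqxx mulr1n big1 ?addr0 // => j /negbTE nj.
by rewrite eq_sym nj mulr0n.
Qed.

Local Notation img := (in_image p th phi).

Lemma img0 : img 0.
Proof. by exists [::], (fun _ => 0); split => //; rewrite big_nil. Qed.

Lemma img_add m1 m2 : img m1 -> img m2 -> img (m1 + m2).
Proof.
case=> s1 [x1 [h1 ->]] [s2 [x2 [h2 ->]]].
pose r := undup (s1 ++ s2).
pose x j := x1 j *+ count_mem j s1 + x2 j *+ count_mem j s2.
have zt (s0 : seq I) (x0 : I -> algC) j : (forall i, i \in s0 -> in_Zthp p th (x0 i)) ->
    in_Zthp p th (x0 j *+ count_mem j s0) /\ phi j (x0 j *+ count_mem j s0) = phi j (x0 j) *+ count_mem j s0.
  move=> h0; case: (boolP (j \in s0)) => js.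
    by split; [apply: zthp_muln; apply: h0|apply: phi_muln; apply: h0].
  by rewrite (count_memPn js) !mulr0n phi0; split => //; exact: zthp0.
exists r, x; split.
  by move=> j _; apply: zthp_add; [exact: (zt _ _ j h1).1|exact: (zt _ _ j h2).1].
rewrite (@sum_count _ s1 r) ?undup_uniq //; last first.
  by move=> j js; rewrite mem_undup mem_cat js.
rewrite (@sum_count _ s2 r) ?undup_uniq //; last first.
  by move=> j js; rewrite mem_undup mem_cat js orbT.
rewrite -big_split /=; apply: eq_bigr => j _.
rewrite phi_add; last exact: (zt _ _ j h2).1; last exact: (zt _ _ j h1).1.
by rewrite (zt _ _ j h1).2 (zt _ _ j h2).2.
Qed.

Lemma img_sum (s : seq I) (F : I -> M) : (forall j, img (F j)) -> img (\sum_(j <- s) F j).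
Proof. by move=> h; apply: (big_ind img img0 img_add) => j _; exact: h. Qed.

Lemma img_e i c : img (e i *+ c).
Proof.
exists [:: i], (fun _ => c%:R); split.
  by move=> j _; exists 0%N, ((c%:Z)%:P); rewrite expr0 mulr1 -[_.[th]]/(ev _) evC.
rewrite big_seq1 (@phi_spec i _ 0 ((c%:Z)%:P)) ?pe_C //.
by rewrite expr0 mulr1 evC.
Qed.

Lemma img_ker m : m - t m = 0 -> img m.
Proof. by move=> /(he.2.2) [s [c ->]]; apply: img_sum => j; exact: img_e. Qed.

Lemma img_phi_div i x : in_Zthp p th x ->
  phi i (x / (1 - th)) - t (phi i (x / (1 - th))) = phi i x.
Proof.
move=> /zthp_rep [k [f Ef]].
have nz := pi_neq0 hp hth.
rewrite (phi_spec i Ef) (@phi_spec i _ k.+1 f); last first.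
  by rewrite exprSr mulrA mulrAC divfK // -Ef.
by rewrite -pe_pi -pe_mul mulrC pe_mul a_step.
Qed.

Lemma T j z : pe ((1 - 'X) ^+ j) z = 0 -> img z.
Proof.
elim: j z => [|j IH] z; first by rewrite expr0 pe1 => ->; exact: img0.
rewrite exprSr pe_mul pe_pi => /IH [s [x [hx E]]].
pose w := \sum_(i <- s) phi i (x i / (1 - th)).
have Ew : w - t w = z - t z.
  rewrite E /w raddf_sum -sumrB big_seq_cond [RHS]big_seq_cond.
  by apply: eq_bigr => i /andP [si _]; rewrite img_phi_div //; apply: hx.
have -> : z = (z - w) + w by rewrite subrK.
apply: img_add.
  apply: img_ker; rewrite raddfB opprD opprK addrACA -Ew (addrC (- w)) -opprB.
  exact: addNr.
exists s, (fun i => x i / (1 - th)); split => //.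
by move=> i si; apply: zthp_divpi; exact: hx.
Qed.

Lemma img_divp m : img (m *+ p) -> img m.
Proof.
case=> s [x [hx E]].
pose w := \sum_(i <- s) phi i (x i / p%:R).
have nz : p%:R != 0 :> algC by rewrite pnatr_eq0 -lt0n prime_gt0.
have Ew : m *+ p = w *+ p.
  rewrite E /w -sumrMnl big_seq_cond [RHS]big_seq_cond.
  apply: eq_bigr => i /andP [si _].
  have [k [f Ef]] := zthp_rep (zthp_divp (hx i si)).
  rewrite (phi_spec i Ef) (@phi_spec i _ k ((p%:Z)%:P * f)).
    by rewrite pe_scale.
  by rewrite evM evP -Ef mulrA (mulrC p%:R) divfK.
have [ee [h Eh]] := KEY hp hth.
have : pe ((1 - 'X) ^+ ee) (m - w) = 0.
  by apply: (tors Eh); rewrite mulrnBl Ew subrr.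
move=> /T Hi.
have -> : m = (m - w) + w by rewrite subrK.
apply: img_add => //.
exists s, (fun i => x i / p%:R); split => //.
by move=> i si; apply: zthp_divp; exact: hx.
Qed.

End Phi.
End Main.

Theorem lemma6p8 (p : nat) (th : algC) (M : zmodType) (t : {additive M -> M}) :
  prime p -> p.-primitive_root th ->
  (forall m : M, iter p t m = m) ->
  (forall m : M, exists m' : M, m = m' - t m') ->
  (forall m : M, Nt p t m = 0) /\
  (forall m : M, m - t m = 0 -> m *+ p = 0) /\
  (forall (I : eqType) (e : I -> M), is_basis_ker p t e ->
    exists phi : I -> algC -> M,
      (forall i x y, in_Zthp p th x -> in_Zthp p th y ->
         phi i (x + y) = phi i x + phi i y) /\
      (forall i x, in_Zthp p th x -> phi i (th * x) = t (phi i x)) /\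
      (forall i x, in_ideal th x -> phi i x = 0) /\
      (forall (s : seq I) (x : I -> algC), uniq s ->
         (forall i, i \in s -> in_Zthp p th (x i)) ->
         \sum_(i <- s) phi i (x i) = 0 ->
         forall i, i \in s -> in_ideal th (x i)) /\
      (forall m : M, exists m' : M, in_image p th phi (m - m' *+ p)) /\
      (forall m : M, in_image p th phi (m *+ p) -> in_image p th phi m)).
Proof.
move=> hp hth hper hsurj.
split; first exact: (hN hper hsurj).
split; first by move=> m; exact: (hker hper hsurj).
move=> I e he; exists (phi th hsurj e).
split; first by move=> i x y; exact: (phi_add hp hth hper hsurj e i).
split; first by move=> i x; exact: (phi_t hp hth hper hsurj e i).
split; first by move=> i x; exact: (phi_ideal hp hth hper hsurj he i).
split; first by move=> s x; exact: (INJ hp hth hper he).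
split; last by move=> m; exact: (img_divp hp hth hper he).
move=> m; have [m' Em] := hdiv hp hth hper hsurj m.
exists m'; rewrite -Em subrr.
by exists [::], (fun _ => 0); split => //; rewrite big_nil.
Qed.
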